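(* Let $\mathcal T\colon\mathbb{R}^s\to\mathbb{R}^s$ be a diffeomorphism with Lipschitz constants $\mathrm{Lip}(\mathcal T)\le K$ and $\mathrm{Lip}(\mathcal T^{-1})\le L$, and let $P_Z=\mathcal N(0,I)$ be the standard normal distribution on $\mathbb{R}^s$. Then for every $\mathrm{p}\in\mathbb{R}^s$, $$\frac{1}{L^sK^s}\,\mathcal N\big(\mathrm{p}\,\big|\,\mathcal T(0),\tfrac{1}{L^2}I\big)\le p_{\mathcal T_\#P_Z}(\mathrm{p})\le L^sK^s\,\mathcal N\big(\mathrm{p}\,\big|\,\mathcal T(0),K^2I\big).$$
   Context: $\mathcal T_\#P_Z=P_Z\circ\mathcal T^{-1}$ is the push-forward of $P_Z$ under $\mathcal T$, and $p_{\mathcal T_\#P_Z}$ its density, given by $p_{\mathcal T_\#P_Z}(\mathrm p)=p_Z(\mathcal T^{-1}(\mathrm p))\,|\det(\nabla\mathcal T^{-1}(\mathrm p))|$ where $p_Z$ is the standard normal density. $\mathcal N(\mathrm p\mid \mu,\Sigma)$ denotes the density at $\mathrm p$ of the normal distribution with mean $\mu$ and covariance $\Sigma$. *)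

(* Defs.v *)
From HB Require Import structures.
From mathcomp Require Import all_boot all_order all_algebra.
From mathcomp Require Import all_classical all_reals all_analysis.
Set Implicit Arguments. Unset Strict Implicit. Unset Printing Implicit Defensive.
Import Order.TTheory GRing.Theory Num.Theory.
Import numFieldNormedType.Exports.
Local Open Scope ring_scope.

(* Euclidean norm on R^s (the library norm on matrices is the sup norm). *)
Definition eucl_norm (R : realType) (s : nat) (v : 'rV[R]_s) : R :=
  Num.sqrt (\sum_(i < s) (v ord0 i) ^+ 2).

Definition eucl_lipschitz (R : realType) (s : nat) (K : R)
    (f : 'rV[R]_s -> 'rV[R]_s) : Prop :=
  forall x y, eucl_norm (f x - f y) <= K * eucl_norm (x - y).

Definition diffeomorphism (R : realType) (s : nat)
    (f g : 'rV[R]_s -> 'rV[R]_s) : Prop :=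
  [/\ cancel f g, cancel g f,
      (forall x, differentiable f x), (forall x, differentiable g x) &
      (continuous (jacobian f) /\ continuous (jacobian g))].

Definition normal_iso_pdf (R : realType) (s : nat) (mu : 'rV[R]_s) (v : R)
    (p : 'rV[R]_s) : R :=
  (Num.sqrt (2 * pi * v))^-1 ^+ s * expR (- (eucl_norm (p - mu)) ^+ 2 / (2 * v)).

Definition std_normal_pdf (R : realType) (s : nat) (z : 'rV[R]_s) : R :=
  normal_iso_pdf 0 1 z.

(* density of the push-forward T_# P_Z, given by the change of variables
   formula p_Z(T^{-1} p) |det (grad T^{-1})(p)| ; Tinv is the inverse of T. *)
Definition pushforward_pdf (R : realType) (s : nat)
    (Tinv : 'rV[R]_s -> 'rV[R]_s) (p : 'rV[R]_s) : R :=
  std_normal_pdf (Tinv p) * `|\det (jacobian Tinv p)|.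

(* Main.v *)
Require Import Defs.
From HB Require Import structures.
From mathcomp Require Import all_boot all_order all_algebra.
From mathcomp Require Import all_classical all_reals all_analysis.
From mathcomp Require Import ring lra.
Import Order.TTheory GRing.Theory Num.Theory.
Import numFieldNormedType.Exports.
Local Open Scope ring_scope.

Section Had.
Variable R : realType.

Lemma delta_quad n (M : 'M[R]_n) (i : 'I_n) :
  ((delta_mx 0 i : 'rV_n) *m M *m (delta_mx 0 i : 'rV_n)^T) 0 0 = M i i.
Proof. by rewrite trmx_delta -rowE -colE !mxE. Qed.

Lemma delta_neq0 n (i : 'I_n) : (delta_mx 0 i : 'rV[R]_n) != 0.
Proof.
apply/eqP => /matrixP/(_ 0 i); rewrite !mxE !eqxx /= => /eqP.
by rewrite oner_eq0.
Qed.

Lemma pd_det_le n (M : 'M[R]_n) : M^T = M ->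
  (forall x : 'rV_n, x != 0 -> 0 < (x *m M *m x^T) 0 0) ->
  \det M <= \prod_i M i i.
Proof.
elim: n M => [|n IH] M sym pd.
  by rewrite det_mx00 big_ord0.
pose M1 : 'M[R]_(1 + n) := M.
pose c := M 0 0.
pose b := ursubmx M1.
pose M' := drsubmx M1.
have dl : dlsubmx M1 = b^T by rewrite trmx_ursub /M1 sym.
have ul : ulsubmx M1 = c%:M.
  rewrite [LHS]mx11_scalar !mxE /c. congr (_%:M); congr (M _ _); exact/val_inj.
have symM' : M'^T = M' by rewrite trmx_drsub /M1 sym.
have hM : M1 = block_mx c%:M b b^T M' by rewrite -ul -dl submxK.
have c0 : 0 < c.
  by have := pd _ (@delta_neq0 n.+1 0); rewrite delta_quad.
pose S := M' - c^-1 *: (b^T *m b).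
have symS : S^T = S.
  by rewrite /S linearB /= linearZ /= trmx_mul trmxK symM'.
have pdS : forall y : 'rV_n, y != 0 -> 0 < (y *m S *m y^T) 0 0.
  move=> y y0.
  pose a := y *m b^T.
  pose x : 'rV_(1 + n) := row_mx (- c^-1 *: a) y.
  have x0 : x != 0.
    apply: contraNneq y0 => x0; by rewrite -(row_mxKr (- c^-1 *: a) y) -/x x0 linear0.
  have := pd x x0.
  have -> : x *m M1 *m x^T = y *m S *m y^T.
    rewrite hM /x mul_row_block tr_row_mx mul_row_col.
    rewrite mul_mx_scalar scalerA mulrN mulfV ?gt_eqF // scaleN1r /a addNr mul0mx add0r.
    rewrite /S mulmxBr mulmxBl mulmxDl -!mulmxA scalemxAl scalemxAr -!scalemxAl.
    rewrite addrC; congr (_ + _); rewrite -scalemxAr -scalemxAl -scalemxAr scaleNr !mulmxA.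
    done.
  by [].
have detM : \det M = c * \det S.
  change (\det M1 = c * \det S); have -> : M1 = block_mx 1%:M 0 (c^-1 *: b^T) 1%:M *m block_mx c%:M b 0 S.
    rewrite hM mulmx_block !mul1mx !mul0mx !addr0 ?mulmx0 ?addr0.
    rewrite mul_mx_scalar scalerA mulfV ?gt_eqF // scale1r -scalemxAl /S.
    by rewrite addrC subrK.
  by rewrite det_mulmx det_lblock det_ublock !det1 !mul1r det_scalar1.
rewrite big_ord_recl detM.
have Mjj : forall j, M (lift ord0 j) (lift ord0 j) = M' j j.
  by move=> j; rewrite /M' !mxE; congr (M _ _); apply/val_inj.
rewrite (eq_bigr _ (fun j _ => Mjj j)) ler_pM2l //.
apply: le_trans (IH S symS pdS) _.
apply: ler_prod => j _.
have := pdS _ (@delta_neq0 n j); rewrite delta_quad => Sj; rewrite (ltW Sj) /=.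
rewrite /S !mxE lerBlDr lerDl big_ord1 !mxE.
by apply: mulr_ge0; [rewrite invr_ge0 ltW | rewrite -expr2 sqr_ge0].
Qed.

Lemma hadamard n (A : 'M[R]_n) (L : R) : 0 <= L ->
  (forall i, \sum_j A i j ^+ 2 <= L ^+ 2) -> `|\det A| <= L ^+ n.
Proof.
move=> L0 rowL.
have [d0|d0] := eqVneq (\det A) 0.
  by rewrite d0 normr0 exprn_ge0.
have Au : A \in unitmx by rewrite unitmxE unitfE.
pose M := A *m A^T.
have symM : M^T = M by rewrite /M trmx_mul trmxK.
have pdM : forall x : 'rV_n, x != 0 -> 0 < (x *m M *m x^T) 0 0.
  move=> x x0.
  have u0 : x *m A != 0.
    apply: contraNneq x0 => xA0.
    by rewrite -(mulmxK Au x) xA0 mul0mx.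
  rewrite /M mulmxA -[_ *m x^T]mulmxA -trmx_mul mxE.
  set u := x *m A in u0 *.
  rewrite lt_def; apply/andP; split; last first.
    by apply: sumr_ge0 => j _; rewrite !mxE -expr2 sqr_ge0.
  apply: contra u0 => /eqP /psumr_eq0P H.
  have {}H := H (fun k _ => ltac:(by rewrite !mxE -expr2 sqr_ge0)).
  apply/eqP/matrixP => i j; rewrite (ord1 i) [RHS]mxE.
  by have := H j isT; rewrite !mxE -expr2 => /eqP; rewrite sqrf_eq0 => /eqP.
have := @pd_det_le n M symM pdM.
rewrite /M det_mulmx det_tr -expr2 => h.
have h2 : \prod_i M i i <= (L ^+ n) ^+ 2.
  rewrite -exprM mulnC exprM.
  have -> : (L ^+ 2) ^+ n = \prod_(i < n) L ^+ 2 by rewrite prodr_const card_ord.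
  apply: ler_prod => i _; rewrite /M mxE; apply/andP; split.
    by apply: sumr_ge0 => j _; rewrite !mxE -expr2 sqr_ge0.
  by apply: le_trans (rowL i); apply: ler_sum => j _; rewrite mxE expr2.
have := le_trans h h2.
rewrite -real_normK ?num_real // ler_sqr // nnegrE ?exprn_ge0 //.
Qed.
End Had.

Section An.
Local Open Scope classical_set_scope.
Local Open Scope ring_scope.
Variable R : realType.

Lemma Q_cont (s : nat) (r : seq 'I_s) :
  continuous (fun w : 'rV[R]_s => \sum_(j <- r) (w 0 j)^+2).
Proof.
elim: r => [|j r IH].
  rewrite (_ : (fun w => _) = cst 0); first exact: cst_continuous.
  by apply: funext => w; rewrite big_nil.
rewrite (_ : (fun w => _) = (fun w : 'rV[R]_s => w 0 j * w 0 j) +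
   (fun w => \sum_(k <- r) (w 0 k)^+2)); last first.
  by apply: funext => w; rewrite big_cons expr2.
move=> w; apply: continuousD; last exact: IH.
by apply: (@continuousM _ _ (fun w : 'rV[R]_s => w 0 j) (fun w => w 0 j));
  apply: coord_continuous.
Qed.

Lemma Q_scale s (k : R) (w : 'rV[R]_s) :
  \sum_j ((k *: w) 0 j)^+2 = k ^+ 2 * \sum_j (w 0 j)^+2.
Proof. by rewrite mulr_sumr; apply: eq_bigr => j _; rewrite mxE exprMn. Qed.

Lemma jac_row_bound s (f : 'rV[R]_s -> 'rV[R]_s) L a i :
  eucl_lipschitz L f -> differentiable f a ->
  \sum_j (jacobian f a) i j ^+ 2 <= L^+2.
Proof.
move=> Lf df.
pose v : 'rV[R]_s := delta_mx 0 i.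
have Qv : \sum_j (v 0 j)^+2 = 1.
  rewrite (bigD1 i) //= big1 => [|k ki]; first by rewrite !mxE !eqxx expr1n addr0.
  by rewrite !mxE (negbTE ki) andbF expr0n.
have -> : \sum_j (jacobian f a) i j ^+ 2 = \sum_j ('D_v f a 0 j)^+2.
  by rewrite (deriveEjacobian _ df) /v -rowE; apply: eq_bigr => j _; rewrite [in RHS]mxE.
have dv : derivable f a v by apply: diff_derivable.
set g := (fun h : R => h^-1 *: ((f \o shift a) (h *: v) - f a)) in dv.
have gD : g @ 0^' --> 'D_v f a := dv.
have cl : closed [set w : 'rV[R]_s | \sum_j (w 0 j)^+2 <= L^+2].
  apply: (@preimage_closed _ _ (fun w : 'rV[R]_s => \sum_j (w 0 j)^+2) [set x | x <= L^+2]).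
    move=> w _; exact: Q_cont.
  exact: closed_le.
suff nr : \forall h \near 0^', [set w : 'rV[R]_s | \sum_j (w 0 j)^+2 <= L^+2] (g h).
  exact: (closed_cvg _ cl nr _ gD).
near=> h.
have h0 : h != 0 by near: h; exact: nbhs_dnbhs_neq.
rewrite /g /= Q_scale.
set D := f (h *: v + a) - f a.
have QD0 : 0 <= \sum_j (D 0 j)^+2 by apply: sumr_ge0 => j _; rewrite sqr_ge0.
have e : eucl_norm D <= L * `|h|.
  have := Lf (h *: v + a) a; rewrite addrK /eucl_norm Q_scale Qv mulr1 sqrtr_sqr.
  by [].
have e2 : \sum_j (D 0 j)^+2 <= L ^+ 2 * h ^+ 2.
  have hh : h ^+ 2 = `|h| ^+ 2 by rewrite real_normK ?num_real.
  have e0 : 0 <= L * `|h| by apply: le_trans e; exact: sqrtr_ge0.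
  rewrite hh -exprMn -(sqr_sqrtr QD0) ler_sqr ?nnegrE ?sqrtr_ge0 //.
rewrite exprVn; apply: le_trans (ler_wpM2l _ e2) _.
  by rewrite invr_ge0 sqr_ge0.
by rewrite mulrCA mulVf ?mulr1 // expf_neq0.
Unshelve. all: by end_near.
Qed.
Lemma eucl_norm_delta s (i : 'I_s) : eucl_norm (delta_mx 0 i : 'rV[R]_s) = 1.
Proof.
rewrite /eucl_norm (bigD1 i) //= big1 => [|k ki]; first by rewrite !mxE !eqxx expr1n addr0 sqrtr1.
by rewrite !mxE (negbTE ki) andbF expr0n.
Qed.

Lemma lip_ge0 s (f : 'rV[R]_s.+1 -> 'rV[R]_s.+1) K : eucl_lipschitz K f -> 0 <= K.
Proof.
move=> Lf; have := Lf (delta_mx 0 0) 0; rewrite subr0 eucl_norm_delta mulr1.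
by apply: le_trans; exact: sqrtr_ge0.
Qed.
End An.

Theorem lemma2 (R : realType) (s : nat) (T Tinv : 'rV[R]_s -> 'rV[R]_s) (K L : R) :
  diffeomorphism T Tinv ->
  eucl_lipschitz K T -> eucl_lipschitz L Tinv ->
  forall p : 'rV[R]_s,
    (L ^+ s * K ^+ s)^-1 * normal_iso_pdf (T 0) (L ^+ 2)^-1 p
      <= pushforward_pdf Tinv p /\
    pushforward_pdf Tinv p <= L ^+ s * K ^+ s * normal_iso_pdf (T 0) (K ^+ 2) p.
Proof.
case=> TK TinvK dT dTinv _ LT LTinv p.
case: s T Tinv TK TinvK dT dTinv LT LTinv p => [|n] T Tinv TK TinvK dT dTinv LT LTinv p.
  rewrite /pushforward_pdf /std_normal_pdf /normal_iso_pdf /eucl_norm !big_ord0.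
  by rewrite det_mx00 !expr0 !mulr1 !sqrtr0 !expr0n /= oppr0 !mul0r normr1 invr1 !mul1r !mulr1.
set s := n.+1.
have JJ : jacobian Tinv p *m jacobian T (Tinv p) = 1.
  apply/row_matrixP => i; rewrite !rowE mulmxA /jacobian !mul_rV_lin1 mulmx1.
  have hc : T \o Tinv = id by apply: funext => x /=; rewrite TinvK.
  have := diff_comp (dTinv p) (dT (Tinv p)); rewrite hc => /(congr1 (fun F => F (delta_mx 0 i))) /= <-.
  by rewrite diff_val.
set d := \det (jacobian Tinv p).
set d' := \det (jacobian T (Tinv p)).
have dd : d * d' = 1 by rewrite -det_mulmx JJ det1.
have K0 := @lip_ge0 R n T K LT.
have L0 := @lip_ge0 R n Tinv L LTinv.
have hd : `|d| <= L ^+ s by apply: hadamard => // i; apply: jac_row_bound.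
have hd' : `|d'| <= K ^+ s by apply: hadamard => // i; apply: jac_row_bound.
have d0 : d != 0 by apply: contra_eq_neq dd => ->; rewrite mul0r eq_sym oner_neq0.
have d'0 : d' != 0 by apply: contra_eq_neq dd => ->; rewrite mulr0 eq_sym oner_neq0.
have Ls : 0 < L ^+ s by apply: (@lt_le_trans _ _ `|d|); [rewrite normr_gt0 d0 | exact: hd].
have Ks : 0 < K ^+ s by apply: (@lt_le_trans _ _ `|d'|); [rewrite normr_gt0 d'0 | exact: hd'].
have Lp : 0 < L by rewrite lt_def L0 andbT; apply: contraTneq Ls => ->; rewrite expr0n ltxx.
have Kp : 0 < K by rewrite lt_def K0 andbT; apply: contraTneq Ks => ->; rewrite expr0n ltxx.
have hdK : (K ^+ s)^-1 <= `|d|.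
  have -> : `|d| = `|d'|^-1.
    by rewrite -normfV; congr `|_|; apply: (mulIf d'0); rewrite dd mulVf.
  by rewrite lef_pV2 ?posrE ?normr_gt0 ?d'0.
set N := eucl_norm (p - T 0).
set nz := eucl_norm (Tinv p - 0).
have N0 : 0 <= N by exact: sqrtr_ge0.
have nz0 : 0 <= nz by exact: sqrtr_ge0.
have h1 : nz <= L * N by have := LTinv p (T 0); rewrite TK.
have h2 : N <= K * nz by have := LT (Tinv p) 0; rewrite TinvK.
have pi0 : 0 <= 2 * pi :> R by rewrite mulr_ge0 // ltW // pi_gt0.
set e := Num.sqrt (2 * pi : R).
have e0 : 0 < e by rewrite sqrtr_gt0 mulr_gt0 // pi_gt0.
have sL : Num.sqrt (2 * pi * (L ^+ 2)^-1) = e / L.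
  by rewrite sqrtrM // -exprVn sqrtr_sqr gtr0_norm // invr_gt0.
have sK : Num.sqrt (2 * pi * K ^+ 2) = e * K.
  by rewrite sqrtrM // sqrtr_sqr gtr0_norm.
rewrite /pushforward_pdf /std_normal_pdf /normal_iso_pdf sL sK mulr1 -/e -/N -/nz.
have es : 0 < e ^+ s by rewrite exprn_gt0.
split.
  set E1 := expR _; set E2 := expR _.
  have -> : (L ^+ s * K ^+ s)^-1 * ((e / L)^-1 ^+ s * E1) = (e ^+ s)^-1 * E1 * (K ^+ s)^-1.
    rewrite invf_div expr_div_n; field.
    by rewrite !gt_eqF.
  have E12 : E1 <= E2.
    rewrite /E1 /E2 ler_expR.
    have : nz ^+ 2 <= (L * N) ^+ 2 by rewrite ler_sqr ?nnegrE ?mulr_ge0.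
    rewrite (_ : - N ^+ 2 / (2 / L ^+ 2) = - (L * N) ^+ 2 / 2); last first.
      by rewrite exprMn; field; rewrite gt_eqF // exprn_gt0.
    by rewrite mulr1 !mulNr lerN2 ler_pM2r ?invr_gt0.
  apply: ler_pM => //.
  - by rewrite mulr_ge0 ?expR_ge0 // invr_ge0 ltW.
  - by rewrite invr_ge0 ltW.
  - by rewrite exprVn ler_pM2l // invr_gt0.
set E2 := expR _; set E3 := expR _.
have -> : L ^+ s * K ^+ s * ((e * K)^-1 ^+ s * E3) = (e ^+ s)^-1 * E3 * L ^+ s.
  rewrite invfM exprMn !exprVn; field.
  by rewrite !gt_eqF.
have E23 : E2 <= E3.
  rewrite /E2 /E3 ler_expR.
  have hNK : N / K <= nz by rewrite ler_pdivrMr // mulrC.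
  have : (N / K) ^+ 2 <= nz ^+ 2.
    rewrite ler_sqr ?nnegrE //; exact: divr_ge0 N0 (ltW Kp).
  rewrite (_ : - N ^+ 2 / (2 * K ^+ 2) = - (N / K) ^+ 2 / 2); last first.
    by rewrite expr_div_n; field; rewrite gt_eqF // exprn_gt0.
  by rewrite mulr1 !mulNr lerN2 ler_pM2r ?invr_gt0.
apply: ler_pM => //.
- by rewrite mulr_ge0 ?expR_ge0 // exprn_ge0 // invr_ge0 ltW.
- by rewrite exprVn ler_pM2l // invr_gt0.
Qed.
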